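(* Let $\mathsf{L}$ be a Kripke complete extension of $\mathsf{MIPC}$. Then $\tau\mathsf{L}=\mathsf{MS4}+\{\varphi^t:\mathsf{L}\vdash\varphi\}$ is a modal companion of $\mathsf{L}$, i.e., for every formula $\varphi$ of $\mathcal{L}_{\forall\exists}$, $\mathsf{L}\vdash\varphi$ iff $\tau\mathsf{L}\vdash\varphi^t$.
   Context: $\mathsf{MIPC}$ is the smallest set of formulas in the bimodal language $\mathcal{L}_{\forall\exists}$ containing all theorems of $\mathsf{IPC}$; $\forall(p\wedge q)\leftrightarrow(\forall p\wedge\forall q)$, $\forall p\to p$, $\forall p\to\forall\forall p$; $\exists(p\vee q)\leftrightarrow(\exists p\vee\exists q)$, $p\to\exists p$, $\exists\exists p\to\exists p$, $(\exists p\wedge\exists q)\to\exists(\exists p\wedge q)$; $\exists\forall p\to\forall p$, $\exists p\to\forall\exists p$; closed under modus ponens, substitution and $\varphi/\forall\varphi$; extensions are supersets closed under these rules. An $\mathsf{MIPC}$-frame is $(X,R,Q)$ with $R$ a partial order, $Q$ a quasi-order, $R\subseteq Q$, and $xQy$ implying $\exists z$ with $xRz$ and $zE_Qy$, where $xE_Qy$ iff $xQy$ and $yQx$. Valuations assign $R$-upsets to letters; intuitionistic connectives are interpreted as usual via $R$; $x\vDash\forall\varphi$ iff every $y$ with $xQy$ satisfies $\varphi$; $x\vDash\exists\varphi$ iff some $y$ with $xE_Qy$ satisfies $\varphi$. $\mathsf{L}$ is Kripke complete if it equals the set of formulas valid on all $\mathsf{MIPC}$-frames validating $\mathsf{L}$.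 $\mathsf{MS4}$ is the smallest set of formulas in the classical bimodal language $\mathcal{L}_{\Box\forall}$ containing all classical tautologies, the $\mathsf{S4}$ axioms for $\Box$, the $\mathsf{S5}$ axioms for $\forall$, and $\Box\forall p\to\forall\Box p$, closed under modus ponens, substitution, $\Box$- and $\forall$-necessitation. Gödel translation: $\bot^t=\bot$, $p^t=\Box p$, $(\varphi\wedge\psi)^t=\varphi^t\wedge\psi^t$, $(\varphi\vee\psi)^t=\varphi^t\vee\psi^t$, $(\varphi\to\psi)^t=\Box(\neg\varphi^t\vee\psi^t)$, $(\forall\varphi)^t=\Box\forall\varphi^t$, $(\exists\varphi)^t=\neg\forall\neg\varphi^t$. *)

(* Defs.v *)
From Stdlib Require Import Arith.

Inductive iform : Type :=
| IVar : nat -> iform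
| IBot : iform
| IAnd : iform -> iform -> iform
| IOr  : iform -> iform -> iform
| IImp : iform -> iform -> iform
| IAll : iform -> iform
| IEx  : iform -> iform.

Definition IIff (a b : iform) : iform := IAnd (IImp a b) (IImp b a).

Fixpoint isubst (s : nat -> iform) (f : iform) : iform :=
  match f with
  | IVar n => s n
  | IBot => IBot
  | IAnd a b => IAnd (isubst s a) (isubst s b)
  | IOr a b => IOr (isubst s a) (isubst s b)
  | IImp a b => IImp (isubst s a) (isubst s b)
  | IAll a => IAll (isubst s a)
  | IEx a => IEx (isubst s a)
  end.

Fixpoint iprop (f : iform) : Prop :=
  match f with
  | IVar _ | IBot => True
  | IAnd a b | IOr a b | IImp a b => iprop a /\ iprop b
  | IAll _ | IEx _ => False
  end.

Inductive IPC : iform -> Prop :=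
| ipc_k  : forall a b, IPC (IImp a (IImp b a))
| ipc_s  : forall a b c,
    IPC (IImp (IImp a (IImp b c)) (IImp (IImp a b) (IImp a c)))
| ipc_andl : forall a b, IPC (IImp (IAnd a b) a)
| ipc_andr : forall a b, IPC (IImp (IAnd a b) b)
| ipc_andi : forall a b, IPC (IImp a (IImp b (IAnd a b)))
| ipc_orl  : forall a b, IPC (IImp a (IOr a b))
| ipc_orr  : forall a b, IPC (IImp b (IOr a b))
| ipc_ore  : forall a b c,
    IPC (IImp (IImp a c) (IImp (IImp b c) (IImp (IOr a b) c)))
| ipc_efq  : forall a, IPC (IImp IBot a)
| ipc_mp   : forall a b, IPC (IImp a b) -> IPC a -> IPC b.

Definition IPC_thm (f : iform) : Prop := iprop f /\ IPC f.

Definition p0 := IVar 0.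
Definition q0 := IVar 1.

Inductive MIPC_ax : iform -> Prop :=
| ax_all_and : MIPC_ax (IIff (IAll (IAnd p0 q0)) (IAnd (IAll p0) (IAll q0)))
| ax_all_T   : MIPC_ax (IImp (IAll p0) p0)
| ax_all_4   : MIPC_ax (IImp (IAll p0) (IAll (IAll p0)))
| ax_ex_or   : MIPC_ax (IIff (IEx (IOr p0 q0)) (IOr (IEx p0) (IEx q0)))
| ax_ex_T    : MIPC_ax (IImp p0 (IEx p0))
| ax_ex_4    : MIPC_ax (IImp (IEx (IEx p0)) (IEx p0))
| ax_ex_and  : MIPC_ax (IImp (IAnd (IEx p0) (IEx q0)) (IEx (IAnd (IEx p0) q0)))
| ax_ex_all  : MIPC_ax (IImp (IEx (IAll p0)) (IAll p0))
| ax_ex_B    : MIPC_ax (IImp (IEx p0) (IAll (IEx p0))).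

Inductive MIPC : iform -> Prop :=
| mipc_ipc : forall f, IPC_thm f -> MIPC f
| mipc_ax  : forall f, MIPC_ax f -> MIPC f
| mipc_mp  : forall a b, MIPC (IImp a b) -> MIPC a -> MIPC b
| mipc_sub : forall s f, MIPC f -> MIPC (isubst s f)
| mipc_gen : forall f, MIPC f -> MIPC (IAll f).

Definition MIPC_extension (L : iform -> Prop) : Prop :=
  (forall f, MIPC f -> L f) /\
  (forall a b, L (IImp a b) -> L a -> L b) /\
  (forall s f, L f -> L (isubst s f)) /\
  (forall f, L f -> L (IAll f)).

Definition EQ {X : Type} (Q : X -> X -> Prop) (x y : X) : Prop := Q x y /\ Q y x.

Definition MIPC_frame {X : Type} (R Q : X -> X -> Prop) : Prop :=
  (forall x, R x x) /\ (forall x y z, R x y -> R y z -> R x z) /\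
  (forall x y, R x y -> R y x -> x = y) /\
  (forall x, Q x x) /\ (forall x y z, Q x y -> Q y z -> Q x z) /\
  (forall x y, R x y -> Q x y) /\
  (forall x y, Q x y -> exists z, R x z /\ EQ Q z y).

Fixpoint isat {X : Type} (R Q : X -> X -> Prop) (V : nat -> X -> Prop)
  (x : X) (f : iform) : Prop :=
  match f with
  | IVar n => V n x
  | IBot => False
  | IAnd a b => isat R Q V x a /\ isat R Q V x b
  | IOr a b => isat R Q V x a \/ isat R Q V x b
  | IImp a b => forall y, R x y -> isat R Q V y a -> isat R Q V y b
  | IAll a => forall y, Q x y -> isat R Q V y a
  | IEx a => exists y, EQ Q x y /\ isat R Q V y a
  end.

Definition upset_valuation {X : Type} (R : X -> X -> Prop) (V : nat -> X -> Prop) :=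
  forall n x y, R x y -> V n x -> V n y.

Definition frame_valid {X : Type} (R Q : X -> X -> Prop) (f : iform) : Prop :=
  forall V, upset_valuation R V -> forall x, isat R Q V x f.

Definition frame_validates {X : Type} (R Q : X -> X -> Prop) (L : iform -> Prop) :=
  forall f, L f -> frame_valid R Q f.

Definition Kripke_complete (L : iform -> Prop) : Prop :=
  forall f, L f <->
    (forall (X : Type) (R Q : X -> X -> Prop),
        MIPC_frame R Q -> frame_validates R Q L -> frame_valid R Q f).

Inductive mform : Type :=
| MVar : nat -> mform
| MBot : mform
| MAnd : mform -> mform -> mform
| MOr  : mform -> mform -> mform
| MImp : mform -> mform -> mform
| MBox : mform -> mform
| MAll : mform -> mform.

Definition MNeg (a : mform) : mform := MImp a MBot.

Fixpoint msubst (s : nat -> mform) (f : mform) : mform :=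
  match f with
  | MVar n => s n
  | MBot => MBot
  | MAnd a b => MAnd (msubst s a) (msubst s b)
  | MOr a b => MOr (msubst s a) (msubst s b)
  | MImp a b => MImp (msubst s a) (msubst s b)
  | MBox a => MBox (msubst s a)
  | MAll a => MAll (msubst s a)
  end.

Fixpoint mprop (f : mform) : Prop :=
  match f with
  | MVar _ | MBot => True
  | MAnd a b | MOr a b | MImp a b => mprop a /\ mprop b
  | MBox _ | MAll _ => False
  end.

Fixpoint beval (v : nat -> bool) (f : mform) : bool :=
  match f with
  | MVar n => v n
  | MBot => false
  | MAnd a b => beval v a && beval v b
  | MOr a b => beval v a || beval v b
  | MImp a b => implb (beval v a) (beval v b)
  | MBox a => beval v a   (* irrelevant: only used on modality-free formulas *)
  | MAll a => beval v a
  end.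

Definition tautology (f : mform) : Prop := mprop f /\ forall v, beval v f = true.

Definition mp0 := MVar 0.
Definition mq0 := MVar 1.

Inductive MS4_ax : mform -> Prop :=
| ms4_box_K : MS4_ax (MImp (MBox (MImp mp0 mq0)) (MImp (MBox mp0) (MBox mq0)))
| ms4_box_T : MS4_ax (MImp (MBox mp0) mp0)
| ms4_box_4 : MS4_ax (MImp (MBox mp0) (MBox (MBox mp0)))
| ms4_all_K : MS4_ax (MImp (MAll (MImp mp0 mq0)) (MImp (MAll mp0) (MAll mq0)))
| ms4_all_T : MS4_ax (MImp (MAll mp0) mp0)
| ms4_all_5 : MS4_ax (MImp (MNeg (MAll mp0)) (MAll (MNeg (MAll mp0))))
| ms4_lt    : MS4_ax (MImp (MBox (MAll mp0)) (MAll (MBox mp0))).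

Inductive MS4plus (Gamma : mform -> Prop) : mform -> Prop :=
| ms4_taut : forall f, tautology f -> MS4plus Gamma f
| ms4_ax   : forall f, MS4_ax f -> MS4plus Gamma f
| ms4_hyp  : forall f, Gamma f -> MS4plus Gamma f
| ms4_mp   : forall a b, MS4plus Gamma (MImp a b) -> MS4plus Gamma a -> MS4plus Gamma b
| ms4_sub  : forall s f, MS4plus Gamma f -> MS4plus Gamma (msubst s f)
| ms4_nbox : forall f, MS4plus Gamma f -> MS4plus Gamma (MBox f)
| ms4_nall : forall f, MS4plus Gamma f -> MS4plus Gamma (MAll f).

Definition MS4 : mform -> Prop := MS4plus (fun _ => False).

Fixpoint godel (f : iform) : mform :=
  match f with
  | IVar n => MBox (MVar n)
  | IBot => MBot
  | IAnd a b => MAnd (godel a) (godel b)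
  | IOr a b => MOr (godel a) (godel b)
  | IImp a b => MBox (MOr (MNeg (godel a)) (godel b))
  | IAll a => MBox (MAll (godel a))
  | IEx a => MNeg (MAll (MNeg (godel a)))
  end.

Definition tauL (L : iform -> Prop) : mform -> Prop :=
  MS4plus (fun g => exists f, L f /\ g = godel f).

(* Main.v *)
Require Import Defs.
From Stdlib Require Import Classical ClassicalEpsilon Bool.

Fixpoint msat {X : Type} (R Q : X -> X -> Prop) (U : nat -> X -> Prop)
  (x : X) (f : mform) : Prop :=
  match f with
  | MVar n => U n x
  | MBot => False
  | MAnd a b => msat R Q U x a /\ msat R Q U x b
  | MOr a b => msat R Q U x a \/ msat R Q U x b
  | MImp a b => msat R Q U x a -> msat R Q U x b
  | MBox a => forall y, R x y -> msat R Q U y a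
  | MAll a => forall y, EQ Q x y -> msat R Q U y a
  end.

Lemma msat_subst {X : Type} (R Q : X -> X -> Prop) s f : forall U x,
  msat R Q U x (msubst s f) <-> msat R Q (fun n y => msat R Q U y (s n)) x f.
Proof.
  induction f as [n| |f1 IHf1 f2 IHf2|f1 IHf1 f2 IHf2|f1 IHf1 f2 IHf2|f IHf|f IHf]; intros U x; simpl; try tauto.
  - rewrite IHf1, IHf2; tauto.
  - rewrite IHf1, IHf2; tauto.
  - rewrite IHf1, IHf2; tauto.
  - split; intros H y Hy; apply IHf; auto.
  - split; intros H y Hy; apply IHf; auto.
Qed.

Lemma isat_ext {X : Type} (R Q : X -> X -> Prop) V V' :
  (forall n y, V n y <-> V' n y) -> forall f x, isat R Q V x f <-> isat R Q V' x f.
Proof.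
  intros HV f; induction f as [n| |f1 IHf1 f2 IHf2|f1 IHf1 f2 IHf2|f1 IHf1 f2 IHf2|f IHf|f IHf]; intros x; simpl; try tauto.
  - apply HV.
  - rewrite IHf1, IHf2; tauto.
  - rewrite IHf1, IHf2; tauto.
  - split; intros H y Hy; [rewrite <- IHf1, <- IHf2 | rewrite IHf1, IHf2]; auto.
  - split; intros H y Hy; [rewrite <- IHf | rewrite IHf]; auto.
  - split; intros [y [H1 H2]]; exists y; split; auto; [rewrite <- IHf | rewrite IHf]; auto.
Qed.

Lemma transl {X : Type} (R Q : X -> X -> Prop) (HF : MIPC_frame R Q) :
  forall f U x, msat R Q U x (godel f) <->
    isat R Q (fun n y => forall z, R y z -> U n z) x f.
Proof.
  destruct HF as [Rr [Rt [Ra [Qr [Qt [RQ Hc]]]]]].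
  induction f as [n| |f1 IHf1 f2 IHf2|f1 IHf1 f2 IHf2|f1 IHf1 f2 IHf2|f IHf|f IHf]; intros U x; simpl; try tauto.
  - rewrite IHf1, IHf2; tauto.
  - rewrite IHf1, IHf2; tauto.
  - split; intros H y Hy.
    + rewrite <- IHf1, <- IHf2. destruct (H y Hy); tauto.
    + rewrite IHf1, IHf2. destruct (classic (isat R Q (fun n y0 => forall z, R y0 z -> U n z) y f1)); auto.
  - split.
    + intros H z Hz. destruct (Hc _ _ Hz) as [w [Hw1 Hw2]].
      rewrite <- IHf. apply (H w Hw1 z Hw2).
    + intros H y Hy z [Hz1 Hz2]. rewrite IHf. apply H. eauto.
  - split.
    + intros H. apply NNPP. intro Hn. apply H. intros y Hy Hs.
      apply Hn. exists y. split; auto. rewrite <- IHf. auto.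
    + intros [y [Hy1 Hy2]] H. apply (H y Hy1). rewrite IHf; auto.
Qed.

Lemma taut_sat {X : Type} (R Q : X -> X -> Prop) :
  forall f, mprop f -> forall v U x, (forall n, v n = true <-> U n x) ->
  (msat R Q U x f <-> beval v f = true).
Proof.
  induction f as [n| |f1 IHf1 f2 IHf2|f1 IHf1 f2 IHf2|f1 IHf1 f2 IHf2|f IHf|f IHf]; simpl; intros Hp v U x Hv; try tauto.
  - symmetry; apply Hv.
  - split; [tauto| discriminate].
  - destruct Hp as [H1 H2]. rewrite (IHf1 H1 v U x Hv), (IHf2 H2 v U x Hv).
    destruct (beval v f1); destruct (beval v f2); simpl; intuition congruence.
  - destruct Hp as [H1 H2]. rewrite (IHf1 H1 v U x Hv), (IHf2 H2 v U x Hv).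
    destruct (beval v f1); destruct (beval v f2); simpl; intuition congruence.
  - destruct Hp as [H1 H2]. rewrite (IHf1 H1 v U x Hv), (IHf2 H2 v U x Hv).
    destruct (beval v f1); destruct (beval v f2); simpl; intuition congruence.
Qed.

Lemma sound {X : Type} (R Q : X -> X -> Prop) (L : iform -> Prop)
  (HF : MIPC_frame R Q) (HL : frame_validates R Q L) :
  forall g, tauL L g -> forall U x, msat R Q U x g.
Proof.
  pose proof HF as HF'.
  destruct HF' as [Rr [Rt [Ra [Qr [Qt [RQ Hc]]]]]].
  assert (Er : forall x, EQ Q x x) by (intro; split; auto).
  assert (Es : forall x y, EQ Q x y -> EQ Q y x) by (intros x y [? ?]; split; auto).
  assert (Et : forall x y z, EQ Q x y -> EQ Q y z -> EQ Q x z)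
    by (intros x y z [? ?] [? ?]; split; eauto).
  intros g Hg. induction Hg; intros U x.
  - destruct H as [Hp Hb].
    set (v := fun n => if excluded_middle_informative (U n x) then true else false).
    apply (taut_sat R Q f Hp v U x).
    + intro n; unfold v; destruct (excluded_middle_informative (U n x)); split; auto; try discriminate; tauto.
    + apply Hb.
  - destruct H; simpl; intros.
    + auto.
    + auto.
    + eauto.
    + auto.
    + auto.
    + apply H. intros w Hw. apply H1. eauto.
    + rename H0 into Hxy, H1 into Hyw. destruct Hxy as [Hq1 Hq2].
      assert (Hxw : Q x y0) by eauto.
      destruct (Hc _ _ Hxw) as [w [Hw1 Hw2]]. eapply H; eauto.
  - destruct H as [f0 [Hf ->]]. apply transl; auto.
    apply HL; auto. intros n a b Hab H z Hz. eauto.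
  - simpl in IHHg1. auto.
  - apply msat_subst. auto.
  - simpl; auto.
  - simpl; auto.
Qed.

Theorem proposition3p9 (L : iform -> Prop) :
  MIPC_extension L -> Kripke_complete L ->
  forall phi : iform, L phi <-> tauL L (godel phi).
Proof.
  intros Hext Hkc phi. split.
  - intro H. apply ms4_hyp. exists phi. auto.
  - intro H. apply Hkc. intros X R Q HF HL V HV x.
    pose proof (sound R Q L HF HL _ H V x) as Hs.
    apply (transl R Q HF) in Hs.
    destruct HF as [Rr _].
    apply (isat_ext R Q _ V) in Hs; auto.
    intros n y; split; intros; eauto.
Qed.
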